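(* Let $f:\mathbb{R}^n\to\mathbb{R}$ be a continuously differentiable convex function, and $s$ a positive integer. Let $h(x)=\sum_{i=1}^n h_i(x_i)$ with each $h_i:\mathbb{R}\to\mathbb{R}$ convex and continuously differentiable, with $h$ supercoercive ($\lim_{\|x\|\to\infty}h(x)/\|x\|=\infty$), and assume: (i) if $x_k\to x$ then $D_h(x,x_k)\to0$; (ii) if $D_h(x,x_k)\to0$ for some $x$, then $x_k\to x$; (iii) if $D_h(x_{k+1},x_k)\to0$ then $\|x_{k+1}-x_k\|\to0$ (for all sequences $(x_k)$ in $\mathbb{R}^n$). Assume $L_hh-f$ is convex for some $L_h>0$ and $L>L_h$. Let $(x_k)$ be generated by the BPG algorithm with $h$ and $L$. If $(x_k)$ has a limit point $\bar x$ with $\|\bar x\|_0=s$, then the entire sequence $(x_k)$ converges to $\bar x$.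
   Context: $C_s=\{x\in\mathbb{R}^n:\|x\|_0\le s\}$ where $\|x\|_0$ is the number of nonzero entries. $D_h(y,x)=h(y)-h(x)-\nabla h(x)^T(y-x)$. BPG algorithm: start from $x_0\in C_s$ and for $k\ge0$ pick $x_{k+1}\in\operatorname{argmin}_{x\in C_s}\ \nabla f(x_k)^T(x-x_k)+LD_h(x,x_k)$. *)

(* Defs.v *)
From HB Require Import structures.
From mathcomp Require Import all_boot all_order all_algebra.
From mathcomp Require Import all_classical all_reals all_analysis.
Set Implicit Arguments. Unset Strict Implicit. Unset Printing Implicit Defensive.
Import Order.TTheory GRing.Theory Num.Theory.
Import numFieldNormedType.Exports.
Local Open Scope classical_set_scope.
Local Open Scope ring_scope.

Definition convex_fun {R : realType} {n : nat} (f : 'rV[R]_n -> R) : Prop :=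
  forall (x y : 'rV[R]_n) (t : R), 0 <= t -> t <= 1 ->
    f (t *: x + (1 - t) *: y) <= t * f x + (1 - t) * f y.

Definition convex_fun1 {R : realType} (g : R -> R) : Prop :=
  forall (x y t : R), 0 <= t -> t <= 1 ->
    g (t * x + (1 - t) * y) <= t * g x + (1 - t) * g y.

Definition grad {R : realType} {n : nat} (f : 'rV[R]_n -> R) (x : 'rV[R]_n)
  : 'rV[R]_n := \row_i ('d f x (delta_mx 0 i : 'rV[R]_n)).

Definition C1 {R : realType} {n : nat} (f : 'rV[R]_n -> R) : Prop :=
  (forall x, differentiable f x) /\ continuous (grad f).

Definition C1_1 {R : realType} (g : R -> R) : Prop :=
  (forall x, derivable g x 1) /\ continuous (derive1 g).

Definition Dbreg {R : realType} {n : nat} (h : 'rV[R]_n -> R) (y x : 'rV[R]_n) : R :=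
  h y - h x - 'd h x (y - x).

Definition l0 {R : realType} {n : nat} (x : 'rV[R]_n) : nat :=
  #|[set i : 'I_n | x 0 i != 0]|.

Definition Cs {R : realType} {n : nat} (s : nat) : set 'rV[R]_n :=
  [set x | (l0 x <= s)%N].

Definition supercoercive {R : realType} {n : nat} (h : 'rV[R]_n -> R) : Prop :=
  forall M : R, exists r : R, forall x : 'rV[R]_n, r <= `|x| -> M <= h x / `|x|.

Definition BPG_seq {R : realType} {n : nat} (f h : 'rV[R]_n -> R) (L : R) (s : nat)
  (x : nat -> 'rV[R]_n) : Prop :=
  Cs s (x 0%N) /\
  forall k : nat, Cs s (x k.+1) /\
    forall z : 'rV[R]_n, Cs s z ->
      'd f (x k) (x k.+1 - x k) + L * Dbreg h (x k.+1) (x k)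
      <= 'd f (x k) (z - x k) + L * Dbreg h z (x k).

Definition seq_limit_point {R : realType} {n : nat} (x : nat -> 'rV[R]_n) (xb : 'rV[R]_n) : Prop :=
  exists phi : nat -> nat, (forall k, (phi k < phi k.+1)%N) /\ (x \o phi) @ \oo --> xb.

(* Main.v *)
Require Import Defs.
From HB Require Import structures.
From mathcomp Require Import all_boot all_order all_algebra.
From mathcomp Require Import all_classical all_reals all_analysis.
From mathcomp Require Import ring lra.
Import Order.TTheory GRing.Theory Num.Theory.
Import numFieldNormedType.Exports.
Local Open Scope classical_set_scope.
Local Open Scope ring_scope.
Lemma dquot_le {R : realType} {n : nat} (g : 'rV[R]_n -> R) x d c :
  differentiable g x ->
  (forall t : R, 0 < t -> t <= 1 -> t^-1 * (g (t *: d + x) - g x) <= c) ->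
  'd g x d <= c.
Proof.
move=> dg H.
have hd : derivable g x d by apply: diff_derivable.
have cv : (fun t : R => t^-1 *: (g (t *: d + x) - g x)) @ 0^' --> 'd g x d.
  by rewrite -deriveE.
rewrite leNgt; apply/negP => cd.
move/cvgrPdist_lt: cv => /(_ ('d g x d - c)); rewrite subr_gt0 => /(_ cd).
case/nbhs_ballP => e e0 He.
pose t := Num.min (e / 2) 1.
have t0 : 0 < t by rewrite lt_min ltr01 divr_gt0.
have t1 : t <= 1 by rewrite ge_min lexx orbT.
have := He t.
have bt : ball 0 e t.
  rewrite /ball /= sub0r normrN gtr0_norm //.
  rewrite /t gt_min; apply/orP; left.
  by rewrite ltr_pdivrMr // ltr_pMr // ltr1n.
move=> /(_ bt (lt0r_neq0 t0)).
have := H t t0 t1.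
set q := t^-1 * _.
have -> : t^-1 *: (g (t *: d + x) - g x) = q by [].
move=> hq hl.
have := le_lt_trans (ler_norm _) hl.
lra.
Qed.
Lemma dquot_ge {R : realType} {n : nat} (g : 'rV[R]_n -> R) x d c :
  differentiable g x ->
  (forall t : R, 0 < t -> t <= 1 -> c <= t^-1 * (g (t *: d + x) - g x)) ->
  c <= 'd g x d.
Proof.
move=> dg H.
have hd : derivable g x d by apply: diff_derivable.
have cv : (fun t : R => t^-1 *: (g (t *: d + x) - g x)) @ 0^' --> 'd g x d.
  by rewrite -deriveE.
rewrite leNgt; apply/negP => cd.
move/cvgrPdist_lt: cv => /(_ (c - 'd g x d)); rewrite subr_gt0 => /(_ cd).
case/nbhs_ballP => e e0 He.
pose t := Num.min (e / 2) 1.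
have t0 : 0 < t by rewrite lt_min ltr01 divr_gt0.
have t1 : t <= 1 by rewrite ge_min lexx orbT.
have := He t.
have bt : ball 0 e t.
  rewrite /ball /= sub0r normrN gtr0_norm //.
  rewrite /t gt_min; apply/orP; left.
  by rewrite ltr_pdivrMr // ltr_pMr // ltr1n.
move=> /(_ bt (lt0r_neq0 t0)).
have := H t t0 t1.
set q := t^-1 * _.
have -> : t^-1 *: (g (t *: d + x) - g x) = q by [].
move=> hq hl.
have : - ('d g x d - q) <= `|'d g x d - q| by rewrite -normrN ler_norm.
lra.
Qed.

Lemma conv_grad {R : realType} {n : nat} (g : 'rV[R]_n -> R) x y :
  convex_fun g -> differentiable g x -> 'd g x (y - x) <= g y - g x.
Proof.
move=> gc dg; apply: dquot_le => // t t0 t1.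
have -> : t *: (y - x) + x = t *: y + (1 - t) *: x.
  by rewrite scalerBr scalerBl scale1r addrCA addrA [_ + x]addrC addrA.
have := gc y x t (ltW t0) t1.
move=> hle.
rewrite ler_pdivrMl //.
lra.
Qed.

Lemma h_diff {R : realType} {n : nat} (hi : 'I_n -> R -> R) (h : 'rV[R]_n -> R) x :
  (forall z, h z = \sum_(i < n) hi i (z 0 i)) -> (forall i, C1_1 (hi i)) ->
  differentiable h x.
Proof.
move=> hE hC.
have -> : h = \sum_(i < n) (fun z : 'rV[R]_n => hi i (z 0 i)).
  by apply: funext => z; rewrite hE fct_sumE.
apply: differentiable_sum => i.
apply: (differentiable_comp (f := fun z : 'rV[R]_n => z 0 i) (g := hi i)).
  exact: differentiable_coord.
by apply/derivable1_diffP; case: (hC i).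
Qed.

Lemma h_conv {R : realType} {n : nat} (hi : 'I_n -> R -> R) (h : 'rV[R]_n -> R) :
  (forall z, h z = \sum_(i < n) hi i (z 0 i)) -> (forall i, convex_fun1 (hi i)) ->
  convex_fun h.
Proof.
move=> hE hc x y t t0 t1; rewrite !hE mulr_sumr mulr_sumr -big_split /=.
apply: ler_sum => i _; rewrite !mxE; exact: hc.
Qed.
Lemma phi_ge (phi : nat -> nat) : (forall k, (phi k < phi k.+1)%N) -> forall k, (k <= phi k)%N.
Proof. move=> H; elim=> [|k IH] //; exact: leq_ltn_trans IH (H k). Qed.

Lemma mono_le {R : realType} (u : nat -> R) K :
  (forall k, (K <= k)%N -> u k.+1 <= u k) -> forall k m, (K <= k)%N -> (k <= m)%N -> u m <= u k.
Proof.
move=> H k m Kk; elim: m => [|m IH]; first by rewrite leqn0 => /eqP ->.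
rewrite leq_eqVlt => /orP [/eqP <- //| km].
apply: le_trans (IH km); apply: H; exact: leq_trans Kk km.
Qed.

Lemma mono_sub_lb {R : realType} (u : nat -> R) K phi l :
  (forall k, (phi k < phi k.+1)%N) -> (forall k, (K <= k)%N -> u k.+1 <= u k) ->
  (u \o phi) @ \oo --> l -> forall k, (K <= k)%N -> l <= u k.
Proof.
move=> hphi hm cv k Kk; rewrite leNgt; apply/negP => ul.
move/cvgrPdist_lt: cv => /(_ (l - u k)); rewrite subr_gt0 => /(_ ul).
case=> N _ HN.
have := HN (maxn N k) (leq_maxl _ _).
have := @mono_le _ u K hm _ _ Kk (leq_trans (leq_maxr N k) (@phi_ge phi hphi (maxn N k))).
rewrite /=.
move=> h1 h2; have := le_lt_trans (ler_norm _) h2. lra.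
Qed.

Lemma mono_sub_cvg {R : realType} (u : nat -> R) K phi (l : R) :
  (forall k, (phi k < phi k.+1)%N) -> (forall k, (K <= k)%N -> u k.+1 <= u k) ->
  (u \o phi) @ \oo --> l -> u @ \oo --> l.
Proof.
move=> hphi hm cv.
have lb := @mono_sub_lb R u K phi l hphi hm cv.
apply/cvgrPdist_lt => e e0.
move/cvgrPdist_lt: cv => /(_ e e0); case=> N _ HN.
pose M := maxn N K.
exists (maxn (phi M) K) => // k /= Mk.
have h1 := HN M (leq_maxl _ _).
have KM : (K <= phi M)%N := leq_trans (leq_maxr N K) (@phi_ge phi hphi M).
have h2 := @mono_le _ u K hm _ _ KM (leq_trans (leq_maxl _ _) Mk).
have h3 := lb k (leq_trans (leq_maxr _ _) Mk).
rewrite /= in h1.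
rewrite distrC ger0_norm ?subr_ge0 //.
have := le_lt_trans (ler_norm _) h1.
have : - (l - u (phi M)) <= `|l - u (phi M)| by rewrite -normrN ler_norm.
lra.
Qed.
Lemma l0E {R : realType} {n : nat} (x : 'rV[R]_n) : l0 x = #|[set i : 'I_n | x 0 i != 0]%SET|.
Proof.
rewrite /l0; apply: eq_card => i; rewrite [in RHS]inE.
apply/idP/idP; first by rewrite inE.
by move=> xi; rewrite inE.
Qed.

Lemma arith_desc {R : realType} (Lh a b c d e g : R) :
  Lh * a - b <= (Lh * c - d) - (Lh * e - g) -> d <= g + b + Lh * (c - e - a).
Proof. rewrite !mulrBr; lra. Qed.

Lemma arith_key {R : realType} (L P a b c P2 tA tB : R) :
  P + L * (a - b - P2) <= tA + P + L * (c - b - (tB + P2)) ->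
  0 <= tA + L * (c - a) - L * tB.
Proof. rewrite !mulrBr !mulrDr; lra. Qed.

Lemma arith_fin {R : realType} (L Lh fx1 fxk fxb P Ad hxb hx1 hxk Bd B1 C : R) :
  fx1 <= fxk + P + Lh * (hx1 - hxk - B1) ->
  Ad + P <= fxb - fxk -> fxb <= fx1 ->
  0 <= (L - Lh) * (hx1 - hxk - B1) ->
  L * Bd - Ad <= L * C ->
  L * (hxb - hx1 - C) <= L * (hxb - hxk - (Bd + B1)).
Proof. rewrite !mulrBr !mulrBl !mulrDr; lra. Qed.

Lemma arith_e {R : realType} (t L q Dl Bd Ad : R) :
  q * t = Dl -> 0 <= t * Ad + L * Dl - L * (t * Bd) -> 0 < t ->
  L * Bd - Ad <= L * q.
Proof.
move=> qt key t0.
have e2 : t * (L * q) = L * Dl by rewrite -qt; ring.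
have e3 : t * (L * Bd - Ad) = L * (t * Bd) - t * Ad by ring.
have : t * (L * Bd - Ad) <= t * (L * q) by rewrite e2 e3; lra.
by rewrite ler_pM2l.
Qed.

Lemma fejer_abs {R : realType} {n : nat} (h : 'rV[R]_n -> R)
  (A B C : {linear 'rV[R]_n -> R^o})
  (L Lh fx1 fxk fxb : R) (xk x1 xb : 'rV[R]_n) :
  0 < Lh -> Lh < L ->
  (forall t : R, 0 < t -> t <= 1 ->
     A (x1 - xk) + L * (h x1 - h xk - B (x1 - xk)) <=
     A (t *: (xb - x1) + x1 - xk) +
       L * (h (t *: (xb - x1) + x1) - h xk - B (t *: (xb - x1) + x1 - xk))) ->
  (forall c : R, (forall t : R, 0 < t -> t <= 1 ->
       c <= t^-1 * (h (t *: (xb - x1) + x1) - h x1)) -> c <= C (xb - x1)) ->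
  fx1 <= fxk + A (x1 - xk) + Lh * (h x1 - h xk - B (x1 - xk)) ->
  A (xb - xk) <= fxb - fxk ->
  fxb <= fx1 ->
  0 <= h x1 - h xk - B (x1 - xk) ->
  h xb - h x1 - C (xb - x1) <= h xb - h xk - B (xb - xk).
Proof.
move=> Lh0 LhL opt dq h1 h4 h5 D0.
set d := xb - x1.
have L0 : 0 < L by apply: lt_trans Lh0 LhL.
have star : L * B d - A d <= L * C d.
  rewrite -ler_pdivrMl //.
  apply: dq => t t0 t1.
  have := opt t t0 t1.
  have e1 : t *: d + x1 - xk = t *: d + (x1 - xk) by rewrite addrA.
  have eA : A (t *: d + x1 - xk) = t * A d + A (x1 - xk).
    by rewrite e1 linearD linearZ.
  have eB : B (t *: d + x1 - xk) = t * B d + B (x1 - xk).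
    by rewrite e1 linearD linearZ.
  rewrite eA eB => H.
  have key := arith_key _ _ _ _ _ _ _ _ H.
  rewrite ler_pdivrMl //.
  apply: (arith_e _ _ _ _ _ _ _ key t0).
  by rewrite mulrAC mulVf ?mul1r // gt_eqF.
have dA : A (xb - xk) = A d + A (x1 - xk).
  by rewrite -linearD /d addrA subrK.
have dB : B (xb - xk) = B d + B (x1 - xk).
  by rewrite -linearD /d addrA subrK.
have h6 : 0 <= (L - Lh) * (h x1 - h xk - B (x1 - xk)) by rewrite mulr_ge0 // subr_ge0 ltW.
rewrite -(ler_pM2l L0).
rewrite dA in h4; rewrite dB.
exact: (arith_fin _ _ _ _ _ _ _ _ _ _ _ _ _ h1 h4 h5 h6 star).
Qed.

Theorem theoremA4 (R : realType) (n : nat) (f : 'rV[R]_n -> R) (s : nat)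
  (hi : 'I_n -> R -> R) (h : 'rV[R]_n -> R) (Lh L : R) (x : nat -> 'rV[R]_n)
  (xb : 'rV[R]_n) :
  C1 f -> convex_fun f -> (0 < s)%N ->
  (forall z, h z = \sum_(i < n) hi i (z 0 i)) ->
  (forall i, convex_fun1 (hi i)) -> (forall i, C1_1 (hi i)) ->
  supercoercive h ->
  (forall (u : nat -> 'rV[R]_n) (z : 'rV[R]_n),
     (u @ \oo --> z) -> ((fun k => Dbreg h z (u k)) @ \oo --> 0)) ->
  (forall (u : nat -> 'rV[R]_n) (z : 'rV[R]_n),
     ((fun k => Dbreg h z (u k)) @ \oo --> 0) -> (u @ \oo --> z)) ->
  (forall (u : nat -> 'rV[R]_n),
     ((fun k => Dbreg h (u k.+1) (u k)) @ \oo --> 0) ->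
     ((fun k => `|u k.+1 - u k|) @ \oo --> 0)) ->
  0 < Lh -> convex_fun (fun z => Lh * h z - f z) -> Lh < L ->
  BPG_seq f h L s x ->
  seq_limit_point x xb -> l0 xb = s ->
  (x @ \oo --> xb).
Proof.
move=> [fdiff fgc] fconv s0 hE hconv1 hC1 hsc Hi Hii Hiii Lh0 gconv LhL
  [hx0 hstep] [phi [hphi cvphi]] l0xb.
have hdiff : forall z, differentiable h z by move=> z; exact: (@h_diff R n hi h z hE hC1).
have hconv : convex_fun h := @h_conv R n hi h hE hconv1.
have Dge0 : forall y z, 0 <= Dbreg h y z.
  by move=> y z; rewrite /Dbreg subr_ge0; exact: conv_grad.
have Dxx : forall z, Dbreg h z z = 0 by move=> z; rewrite /Dbreg !subrr (linear0 ('d h z)) subrr.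
have desc : forall y z, f y <= f z + 'd f z (y - z) + Lh * Dbreg h y z.
  move=> y z.
  have gE : (fun z => Lh * h z - f z) = (Lh *: h) - f by apply: funext.
  rewrite gE in gconv.
  have dg : differentiable ((Lh *: h) - f) z.
    by apply: differentiableB => //; apply: differentiableZ.
  have := @conv_grad R n _ z y gconv dg.
  rewrite diffB //; last exact: differentiableZ.
  rewrite diffZ //= /Dbreg => H.
  have H' : Lh * 'd h z (y - z) - 'd f z (y - z) <= (Lh * h y - f y) - (Lh * h z - f z) := H.
  exact: arith_desc H'.
have Cxk : forall k, Cs s (x k) by case=> [|k] //; case: (hstep k).
have opt := fun k => (hstep k).2.
have sdec : forall k, f (x k.+1) + (L - Lh) * Dbreg h (x k.+1) (x k) <= f (x k).
  move=> k; have := opt k (x k) (Cxk k).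
  rewrite subrr (linear0 ('d f (x k))) Dxx mulr0 addr0.
  have := desc (x k.+1) (x k).
  rewrite mulrBl. lra.
have fmono : forall k, (0 <= k)%N -> f (x k.+1) <= f (x k).
  move=> k _; have := sdec k.
  have : 0 <= (L - Lh) * Dbreg h (x k.+1) (x k) by rewrite mulr_ge0 // ?subr_ge0 ?ltW.
  lra.
have fphi : (fun k => f (x k)) \o phi @ \oo --> f xb.
  exact: (continuous_cvg _ (differentiable_continuous (fdiff xb)) cvphi).
have fcv := @mono_sub_cvg R (fun k => f (x k)) 0 phi (f xb) hphi fmono fphi.
have fge := @mono_sub_lb R (fun k => f (x k)) 0 phi (f xb) hphi fmono fphi.
have Dstep : (fun k => Dbreg h (x k.+1) (x k)) @ \oo --> 0.
  apply/cvgrPdist_lt => e e0.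
  move/cvgrPdist_lt: fcv => /(_ (e * (L - Lh))).
  rewrite mulr_gt0 ?subr_gt0 // => /(_ isT).
  apply: filterS => k hk.
  rewrite sub0r normrN ger0_norm //.
  have h1 := sdec k. have h2 := fge k.+1 isT.
  rewrite distrC in hk; have h3 := le_lt_trans (ler_norm _) hk.
  rewrite /= in h1 h2 h3.
  have : (L - Lh) * Dbreg h (x k.+1) (x k) < (L - Lh) * e.
    have h4 : (L - Lh) * Dbreg h (x k.+1) (x k) <= f (x k) - f xb by lra.
    by rewrite [_ * e]mulrC; apply: le_lt_trans h4 h3.
  by rewrite ltr_pM2l // subr_gt0.
have steps := Hiii x Dstep.
pose S := [set i : 'I_n | xb 0 i != 0]%SET.
have cardS : #|S| = s by rewrite -l0xb l0E.
have [del del0 Hdel] : exists2 del : R, 0 < del &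
    forall z : 'rV[R]_n, `|xb - z| < del -> forall i, i \in S -> z 0 i != 0.
  have : nbhs xb (fun z : 'rV[R]_n => forall i : 'I_n, i \in S -> z 0 i != 0).
    apply: (@filter_forall _ _ (fun i (z : 'rV[R]_n) => i \in S -> z 0 i != 0) (nbhs xb) _) => i.
    case: (boolP (i \in S)) => iS; last by apply: nearW => z /=.
    have := @coord_continuous R 1 n 0 i xb.
    move/cvgrPdist_lt => /(_ `|xb 0 i|).
    have xi : xb 0 i != 0 by move: iS; rewrite inE.
    rewrite normr_gt0 xi => /(_ isT).
    apply: filterS => z hz _; apply/negP => /eqP z0.
    by move: hz; rewrite z0 subr0 ltxx.
  case/nbhs_ballP => del del0 Hd; exists del => // z hz.
  by apply: Hd; rewrite -ball_normE /=.
have supp_off : forall z : 'rV[R]_n, Cs s z -> (forall i, i \in S -> z 0 i != 0) ->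
    forall i, i \notin S -> z 0 i = 0.
  move=> z Cz nz i iS; apply/eqP; apply: contraNT iS => zi.
  have sub : S \subset [set j | z 0 j != 0]%SET by apply/fintype.subsetP => j jS; rewrite inE nz.
  have : S == [set j | z 0 j != 0]%SET by rewrite eqEcard sub /= cardS -l0E.
  by move/eqP => ->; rewrite inE.
have seg_Cs : forall y : 'rV[R]_n, (forall i, i \notin S -> y 0 i = 0) ->
    forall t : R, Cs s (t *: (xb - y) + y).
  move=> y yoff t; rewrite /Cs /= l0E -cardS; apply: subset_leq_card.
  apply/fintype.subsetP => j; rewrite !inE !mxE; apply: contraR => jS.
  have xj : xb 0 j = 0 by move: jS; rewrite negbK => /eqP.
  have yj : y 0 j = 0 by apply: yoff; rewrite ?inE.
  by rewrite xj yj subrr mulr0 addr0.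
have Cxb : Cs s xb by rewrite /Cs /= l0xb.
have fejer : forall k, (forall i, i \notin S -> x k.+1 0 i = 0) ->
    Dbreg h xb (x k.+1) <= Dbreg h xb (x k).
  move=> k off.
  apply: (@fejer_abs R n h ('d f (x k)) ('d h (x k)) ('d h (x k.+1)) L Lh
    (f (x k.+1)) (f (x k)) (f xb) (x k) (x k.+1) xb Lh0 LhL).
  - by move=> t t0 t1; exact: (opt k _ (seg_Cs _ off t)).
  - by move=> c Hc; exact: (@dquot_ge R n h (x k.+1) (xb - x k.+1) c (hdiff _) Hc).
  - exact: desc.
  - exact: (@conv_grad R n f (x k) xb fconv (fdiff (x k))).
  - exact: (fge k.+1 isT).
  - exact: Dge0.
have [eps eps0 Heps] : exists2 eps : R, 0 < eps &
    forall z : 'rV[R]_n, Dbreg h xb z < eps -> `|xb - z| < del / 2.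
  have [//|neg] := pselect (exists2 eps : R, 0 < eps &
    forall z : 'rV[R]_n, Dbreg h xb z < eps -> `|xb - z| < del / 2).
  exfalso.
  have hz : forall k : nat, exists z : 'rV[R]_n,
      Dbreg h xb z < harmonic k /\ del / 2 <= `|xb - z|.
    move=> k; apply: contrapT => nz; apply: neg; exists (harmonic k).
      exact: harmonic_gt0.
    move=> z Dz; rewrite ltNge; apply/negP => hz; apply: nz; by exists z; split.
  have [u hu] := choice hz.
  have ucv : (fun k => Dbreg h xb (u k)) @ \oo --> 0.
    apply/cvgrPdist_lt => e e0.
    have := @cvg_harmonic R; move/cvgrPdist_lt => /(_ e e0).
    apply: filterS => k hk.
    rewrite sub0r normrN ger0_norm //.
    rewrite sub0r normrN ger0_norm in hk; last exact: ltW (harmonic_gt0 _).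
    exact: lt_trans (hu k).1 hk.
  have := Hii u xb ucv.
  move/cvgrPdist_lt => /(_ (del / 2)); rewrite divr_gt0 // => /(_ isT).
  case=> N _ HN.
  have a := HN N (leqnn N); have b := (hu N).2.
  by have := le_lt_trans b a; rewrite ltxx.
have := steps; move/cvgrPdist_lt => /(_ (del / 2)); rewrite divr_gt0 // => /(_ isT).
case=> K1 _ HK1.
have Dphi := Hi (x \o phi) xb cvphi.
move/cvgrPdist_lt: Dphi => /(_ eps eps0); case=> J _ HJ.
pose j := maxn J K1; pose K := phi j.
have KK1 : (K1 <= K)%N := leq_trans (leq_maxr J K1) (@phi_ge phi hphi j).
have DK : Dbreg h xb (x K) < eps.
  by have := HJ j (leq_maxl _ _); rewrite /= sub0r normrN ger0_norm.
have step : forall k, (K1 <= k)%N -> Dbreg h xb (x k) < eps ->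
    Dbreg h xb (x k.+1) <= Dbreg h xb (x k).
  move=> k Kk Dk; apply: fejer.
  apply: supp_off; first exact: Cxk.
  apply: Hdel.
  have c1 := Heps _ Dk.
  have c2 := HK1 k Kk; rewrite /= sub0r normrN normr_id distrC in c2.
  apply: le_lt_trans (ler_distD (x k) xb (x k.+1)) _.
  by rewrite (splitr del); apply: ltrD.
have inv : forall m, Dbreg h xb (x (K + m)%N) < eps.
  elim=> [|m IH]; first by rewrite addn0.
  rewrite addnS; apply: le_lt_trans (step _ _ IH) IH.
  exact: leq_trans KK1 (leq_addr _ _).
have mono : forall k, (K <= k)%N -> Dbreg h xb (x k.+1) <= Dbreg h xb (x k).
  move=> k Kk; apply: step; first exact: leq_trans KK1 Kk.
  by have := inv (k - K)%N; rewrite subnKC.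
have Dcv := @mono_sub_cvg R (fun k => Dbreg h xb (x k)) K phi 0 hphi mono (Hi _ _ cvphi).
exact: Hii x xb Dcv.
Qed.
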